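(* Write $e^{\arctan z}=1+\sum_{n=1}^{\infty}a_nz^n$ for $|z|<1$, where $\arctan z=\sum_{k\ge0}\frac{(-1)^kz^{2k+1}}{2k+1}$. Equivalently, $(a_n)$ is the real sequence determined by $a_0=1$, $a_1=1$ and $a_n-(n+1)a_{n+1}-(n-1)a_{n-1}=0$ for $n\ge1$. Then $$\sum_{n=1}^{\infty}a_n^2=1+\frac{1}{2^2}+\frac{1}{6^2}+\frac{7^2}{24^2}+\frac{1}{24^2}+\cdots=\frac{e^{\pi/2}+e^{-\pi/2}}{2}-1.$$ *)

(* Defs.v *)
From Stdlib Require Import Reals.
From Coquelicot Require Import Coquelicot.
Open Scope R_scope.

(* ab n = (a_n, a_{n+1}), where a_0 = 1, a_1 = 1 and, for n >= 1,
   a_n - (n+1) a_{n+1} - (n-1) a_{n-1} = 0, i.e.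
   a_{m+2} = (a_{m+1} - m * a_m) / (m+2)   (taking n = m+1). *)
Fixpoint ab (n : nat) : R * R :=
  match n with
  | O => (1, 1)
  | S m => let (x, y) := ab m in (y, (y - INR m * x) / INR (m + 2))
  end.

Definition a (n : nat) : R := fst (ab n).

(* Main.v *)
Require Import Defs.
From Stdlib Require Import Reals Lra Lia.
From Coquelicot Require Import Coquelicot.
Open Scope R_scope.

Lemma a0 : a 0 = 1. Proof. reflexivity. Qed.
Lemma a1 : a 1 = 1. Proof. reflexivity. Qed.
Lemma aS_snd n : a (S n) = snd (ab n).
Proof. unfold a; simpl; destruct (ab n); reflexivity. Qed.
Lemma aSS m : a (S (S m)) = (a (S m) - INR m * a m) / INR (m + 2).
Proof.
  rewrite !aS_snd. unfold a. simpl. destruct (ab m) as [x y]. simpl. reflexivity.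
Qed.

Lemma a_bound2 n : Rabs (a n) <= 1 /\ Rabs (a (S n)) <= 1.
Proof.
  induction n as [|n [H1 H2]].
  - rewrite a0, a1, Rabs_R1; lra.
  - split. { exact H2. } rewrite aSS.
    assert (Hp : 0 < INR (n+2)) by (apply lt_0_INR; lia).
    rewrite plus_INR in *. replace (INR 2) with 2 in * by (simpl; lra).
    assert (HI : 0 <= INR n) by apply pos_INR.
    unfold Rdiv. rewrite Rabs_mult, Rabs_inv, (Rabs_right (INR n + 2)) by lra.
    apply (Rmult_le_reg_r (INR n + 2)). lra.
    rewrite Rmult_assoc, Rinv_l, Rmult_1_r by lra. unfold Rminus.
    eapply Rle_trans; [apply Rabs_triang | ]. rewrite Rabs_Ropp, Rabs_mult, (Rabs_right (INR n)) by lra.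
    assert (INR n * Rabs (a n) <= INR n) by (rewrite <- (Rmult_1_r (INR n)) at 2; apply Rmult_le_compat_l; lra).
    lra.
Qed.
Lemma a_bound n : Rabs (a n) <= 1.
Proof. apply a_bound2. Qed.

Lemma CV_ge1 (b : nat -> R) : (forall n, Rabs (b n) <= 1) -> Rbar_le 1 (CV_radius b).
Proof.
  intros Hb. destruct (CV_radius_bounded b) as [Hub _]. apply Hub.
  exists 1. intros n. rewrite pow1, Rmult_1_r. apply Hb.
Qed.

Lemma CV_in (b : nat -> R) r : (forall n, Rabs (b n) <= 1) -> Rabs r < 1 ->
  Rbar_lt (Rabs r) (CV_radius b).
Proof.
  intros Hb Hr. generalize (CV_ge1 b Hb). destruct (CV_radius b) as [x| |]; simpl; auto; lra.
Qed.

Definition Ua (t : R) (n : nat) := a n * cos (INR n * t).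
Definition Va (t : R) (n : nat) := a n * sin (INR n * t).

Lemma Ua_b t n : Rabs (Ua t n) <= 1.
Proof. unfold Ua. rewrite Rabs_mult. generalize (a_bound n) (Rabs_pos (a n)) (COS_bound (INR n * t)).
  intros. assert (Rabs (cos (INR n * t)) <= 1) by (apply Rabs_le; lra).
  assert (Rabs (a n) * Rabs (cos (INR n * t)) <= 1 * 1) by (apply Rmult_le_compat; auto; apply Rabs_pos). lra. Qed.
Lemma Va_b t n : Rabs (Va t n) <= 1.
Proof. unfold Va. rewrite Rabs_mult. generalize (a_bound n) (Rabs_pos (a n)) (SIN_bound (INR n * t)).
  intros. assert (Rabs (sin (INR n * t)) <= 1) by (apply Rabs_le; lra).
  assert (Rabs (a n) * Rabs (sin (INR n * t)) <= 1 * 1) by (apply Rmult_le_compat; auto; apply Rabs_pos). lra. Qed.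

Lemma CV_inD (b : nat -> R) r : (forall n, Rabs (b n) <= 1) -> Rabs r < 1 ->
  Rbar_lt (Rabs r) (CV_radius (PS_derive b)).
Proof. intros; rewrite CV_radius_derive; apply CV_in; auto. Qed.

Lemma PS_combo (p q : nat -> R) (al be r : R) :
  ex_pseries p r -> ex_pseries q r ->
  PSeries (fun n => p n + al * PS_incr_n p 2 n + be * PS_incr_n q 2 n) r
  = PSeries p r + r^2 * (al * PSeries p r + be * PSeries q r).
Proof.
  intros Hp Hq.
  rewrite (PSeries_ext _ (PS_plus (PS_plus p (PS_scal al (PS_incr_n p 2))) (PS_scal be (PS_incr_n q 2)))).
  2:{ intros n; reflexivity. }
  rewrite !PSeries_plus, !PSeries_scal, !PSeries_incr_n.
  all: repeat first [ assumption | apply ex_pseries_plus | apply ex_pseries_scal | apply ex_pseries_incr_n | (intros; apply Rmult_comm) ].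
  change (plus ?x ?y) with (x + y). change (scal ?x ?y) with (x * y). ring.
Qed.

Lemma aSSS m : INR (S (S (S m))) * a (S (S (S m))) = a (S (S m)) - INR (S m) * a (S m).
Proof.
  rewrite (aSS (S m)). replace (S m + 2)%nat with (S (S (S m))) by lia.
  field. apply not_0_INR. lia.
Qed.

Lemma a2 : a 2 = / 2.
Proof. rewrite aSS, a1, a0. simpl. field. Qed.

Ltac zero_to_0 := repeat match goal with |- context [@zero ?G] => change (@zero G) with 0 end.

Lemma coefU t n : PS_derive (Ua t) n + cos (2*t) * PS_incr_n (PS_derive (Ua t)) 2 n
   + (- sin (2*t)) * PS_incr_n (PS_derive (Va t)) 2 n = cos t * Ua t n - sin t * Va t n.
Proof.
  destruct n as [|[|m]]; cbn [PS_incr_n PS_incr_1]; zero_to_0; unfold PS_derive, Ua, Va.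
  - rewrite a1, a0. replace (INR 0 * t) with 0 by (simpl; ring). replace (INR 1 * t) with t by (simpl; ring).
    replace (INR 1) with 1 by reflexivity.
    rewrite cos_0, sin_0. ring.
  - rewrite a2, a1. replace (INR 2 * t) with (2*t) by (simpl; ring). replace (INR 2) with 2 by (simpl; ring).
    replace (INR 1 * t) with t by (simpl; ring). rewrite cos_2a, sin_2a. field.
  - set (B := INR (S m) * t).
    replace (INR (S (S (S m))) * t) with (B + 2*t) by (unfold B; rewrite !S_INR; ring).
    replace (INR (S (S m)) * t) with (B + t) by (unfold B; rewrite !S_INR; ring).
    rewrite <- Rmult_assoc, aSSS.
    rewrite !cos_plus, !sin_plus, !cos_2a, !sin_2a. ring.
Qed.

Lemma coefV t n : PS_derive (Va t) n + cos (2*t) * PS_incr_n (PS_derive (Va t)) 2 n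
   + sin (2*t) * PS_incr_n (PS_derive (Ua t)) 2 n = sin t * Ua t n + cos t * Va t n.
Proof.
  destruct n as [|[|m]]; cbn [PS_incr_n PS_incr_1]; zero_to_0; unfold PS_derive, Ua, Va.
  - rewrite a1, a0. replace (INR 0 * t) with 0 by (simpl; ring). replace (INR 1 * t) with t by (simpl; ring).
    replace (INR 1) with 1 by reflexivity.
    rewrite cos_0, sin_0. ring.
  - rewrite a2, a1. replace (INR 2 * t) with (2*t) by (simpl; ring). replace (INR 2) with 2 by (simpl; ring).
    replace (INR 1 * t) with t by (simpl; ring). rewrite cos_2a, sin_2a. field.
  - set (B := INR (S m) * t).
    replace (INR (S (S (S m))) * t) with (B + 2*t) by (unfold B; rewrite !S_INR; ring).
    replace (INR (S (S m)) * t) with (B + t) by (unfold B; rewrite !S_INR; ring).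
    rewrite <- Rmult_assoc, aSSS.
    rewrite !cos_plus, !sin_plus, !cos_2a, !sin_2a. ring.
Qed.

Lemma PS_lin2 (p q : nat -> R) (al be r : R) :
  ex_pseries p r -> ex_pseries q r ->
  PSeries (fun n => al * p n + be * q n) r = al * PSeries p r + be * PSeries q r.
Proof.
  intros Hp Hq.
  rewrite (PSeries_ext _ (PS_plus (PS_scal al p) (PS_scal be q))).
  2:{ intros n; reflexivity. }
  rewrite PSeries_plus, !PSeries_scal.
  all: repeat first [ assumption | apply ex_pseries_plus | apply ex_pseries_scal | (intros; apply Rmult_comm) ].
  reflexivity.
Qed.

Section ODE.
Variable t : R.
Let c := cos t.
Let s := sin t.
Definition Uf r := PSeries (Ua t) r.
Definition Vf r := PSeries (Va t) r.
Definition dUf r := PSeries (PS_derive (Ua t)) r.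
Definition dVf r := PSeries (PS_derive (Va t)) r.

Lemma E1 r : Rabs r < 1 ->
  dUf r + r^2 * (cos (2*t) * dUf r + (- sin (2*t)) * dVf r) = c * Uf r - s * Vf r.
Proof.
  intros Hr. unfold dUf, dVf, Uf, Vf.
  replace (c * PSeries (Ua t) r - s * PSeries (Va t) r) with (c * PSeries (Ua t) r + (-s) * PSeries (Va t) r) by ring.
  rewrite <- PS_combo, <- PS_lin2.
  1: apply PSeries_ext; intros n; rewrite coefU; unfold c, s; ring.
  all: apply CV_radius_inside; first [apply CV_inD; auto; first [apply Ua_b | apply Va_b] | apply CV_in; auto; first [apply Ua_b | apply Va_b]].
Qed.

Lemma E2 r : Rabs r < 1 ->
  dVf r + r^2 * (cos (2*t) * dVf r + sin (2*t) * dUf r) = s * Uf r + c * Vf r.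
Proof.
  intros Hr. unfold dUf, dVf, Uf, Vf.
  rewrite <- PS_combo, <- PS_lin2.
  1: apply PSeries_ext; intros n; rewrite coefV; unfold c, s; ring.
  all: apply CV_radius_inside; first [apply CV_inD; auto; first [apply Ua_b | apply Va_b] | apply CV_in; auto; first [apply Ua_b | apply Va_b]].
Qed.

Definition Dn r := (1 - r^2)^2 + 4 * r^2 * c^2.

Lemma keyX r : Rabs r < 1 ->
  Dn r * (Uf r * dUf r + Vf r * dVf r) = c * (1 + r^2) * (Uf r ^ 2 + Vf r ^ 2).
Proof.
  intros Hr. generalize (E1 r Hr) (E2 r Hr). rewrite cos_2a, sin_2a. fold c s.
  intros H1 H2.
  set (U := Uf r) in *. set (V := Vf r) in *. set (dU := dUf r) in *. set (dV := dVf r) in *.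
  set (A := 1 + r^2 * (c*c - s*s)). set (B := r^2 * (2*s*c)).
  assert (Hs : s^2 + c^2 = 1) by (unfold s, c; rewrite <- !Rsqr_pow2; apply sin2_cos2).
  assert (eq1 : A * (U*dU+V*dV) - B * (U*dV - V*dU) = c * (U^2+V^2)).
  { transitivity ((dU + r ^ 2 * ((c * c - s * s) * dU + - (2 * s * c) * dV)) * U
       + (dV + r ^ 2 * ((c * c - s * s) * dV + 2 * s * c * dU)) * V).
    - unfold A, B; ring.
    - rewrite H1, H2. ring. }
  assert (eq2 : B * (U*dU+V*dV) + A * (U*dV - V*dU) = s * (U^2+V^2)).
  { transitivity ((dV + r ^ 2 * ((c * c - s * s) * dV + 2 * s * c * dU)) * U
       - (dU + r ^ 2 * ((c * c - s * s) * dU + - (2 * s * c) * dV)) * V).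
    - unfold A, B; ring.
    - rewrite H1, H2. ring. }
  assert (HD : Dn r = A^2 + B^2).
  { unfold Dn, A, B. replace (s*s) with (1 - c^2) by lra.
    replace ((r^2 * (2*s*c))^2) with (4 * r^4 * c^2 * s^2) by ring. replace (s^2) with (1-c^2) by lra. ring. }
  assert (HC : c * (1 + r^2) = A * c + B * s).
  { unfold A, B. replace (s*s) with (1 - c^2) by lra.
    replace (r ^ 2 * (2 * s * c) * s) with (2 * r^2 * c * s^2) by ring. replace (s^2) with (1-c^2) by lra. ring. }
  rewrite HD, HC.
  transitivity (A * (A * (U*dU+V*dV) - B * (U*dV - V*dU)) + B * (B * (U*dU+V*dV) + A * (U*dV - V*dU))).
  - ring.
  - rewrite eq1, eq2. ring.
Qed.
End ODE.

Lemma abs_lt1 r : Rabs r < 1 -> 0 < 1 - r^2.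
Proof. intros H. apply Rabs_def2 in H. nra. Qed.

Section ODE2.
Variable t : R.
Definition Hf r := atan (2*r*cos t/(1-r^2)).
Definition Gf r := Uf t r ^ 2 + Vf t r ^ 2.

Lemma Dn_pos r : Rabs r < 1 -> 0 < Dn t r.
Proof. intros H. apply abs_lt1 in H. unfold Dn. nra. Qed.

Lemma derEH r : Rabs r < 1 -> is_derive (fun r => exp (- Hf r)) r (- (2*cos t*(1+r^2)/Dn t r) * exp (- Hf r)).
Proof.
  intros Hr. generalize (abs_lt1 r Hr) (Dn_pos r Hr); intros H1 H2. unfold Hf, Dn in *.
  set (c := cos t) in *.
  auto_derive.
  - lra.
  - match goal with |- ?A = ?B => change (@eq R A B) end.
    set (E := exp _).
    field. repeat split; try nra.
Qed.

Lemma is_derive_eq (f : R -> R) x l l' : is_derive f x l -> l = l' -> is_derive f x l'.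
Proof. intros H ->; exact H. Qed.

Lemma derG r : Rabs r < 1 -> is_derive Gf r (2 * Uf t r * dUf t r + 2 * Vf t r * dVf t r).
Proof.
  intros Hr.
  assert (HU : is_derive (Uf t) r (dUf t r)).
  { apply is_derive_PSeries. apply CV_in; auto; apply Ua_b. }
  assert (HV : is_derive (Vf t) r (dVf t r)).
  { apply is_derive_PSeries. apply CV_in; auto; apply Va_b. }
  generalize (is_derive_plus _ _ _ _ _ (is_derive_pow _ 2 _ _ HU) (is_derive_pow _ 2 _ _ HV)).
  intros H. eapply is_derive_eq.
  - eapply is_derive_ext; [|exact H]. intros x. reflexivity.
  - change (plus ?x ?y) with (x + y). simpl. ring.
Qed.

Definition Kf r := Gf r * exp (- Hf r).

Lemma derK r : Rabs r < 1 -> is_derive Kf r 0.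
Proof.
  intros Hr.
  generalize (is_derive_mult _ _ _ _ _ (derG r Hr) (derEH r Hr) Rmult_comm). intros H.
  eapply is_derive_eq.
  - eapply is_derive_ext; [|exact H]. intros x. reflexivity.
  - change (plus ?x ?y) with (x + y). change (mult ?x ?y) with (x * y).
    match goal with |- ?A = ?B => change (@eq R A B) end.
    generalize (keyX t r Hr) (Dn_pos r Hr). unfold Gf. intros HX HD.
    set (E := exp (- Hf r)).
    replace (2 * Uf t r * dUf t r + 2 * Vf t r * dVf t r) with (2 * (Uf t r * dUf t r + Vf t r * dVf t r)) by ring.
    replace (Uf t r * dUf t r + Vf t r * dVf t r) with (cos t * (1 + r ^ 2) * (Uf t r ^ 2 + Vf t r ^ 2) / Dn t r)
      by (rewrite <- HX; field; lra).
    field. lra.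
Qed.

Lemma Gclosed r : 0 <= r < 1 -> Gf r = exp (Hf r).
Proof.
  intros [H0 H1].
  assert (K0 : Kf 0 = 1).
  { unfold Kf, Gf, Hf, Uf, Vf. rewrite !PSeries_0. unfold Ua, Va. rewrite a0.
    replace (INR 0 * t) with 0 by (simpl; ring). rewrite cos_0, sin_0.
    replace (2 * 0 * cos t / (1 - 0 ^ 2)) with 0 by (simpl; field). rewrite atan_0, Ropp_0, exp_0. ring. }
  assert (Kr : Kf r = 1).
  { destruct (Req_dec r 0) as [->|Hn]; [exact K0|].
    rewrite <- K0. symmetry. apply (eq_is_derive Kf 0 r).
    - intros x Hx. apply derK. rewrite Rabs_right by lra. lra.
    - lra. }
  unfold Kf in Kr. rewrite exp_Ropp in Kr.
  assert (0 < exp (Hf r)) by apply exp_pos.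
  apply (Rmult_eq_reg_r (/ exp (Hf r))). rewrite Kr. field. lra.
  apply Rgt_not_eq, Rlt_gt, Rinv_0_lt_compat; auto.
Qed.
End ODE2.

Fixpoint psum (f : nat -> R) (N : nat) : R :=
  match N with O => 0 | S n => psum f n + f n end.

Lemma psum_S f n : psum f (S n) = sum_f_R0 f n.
Proof. induction n; simpl in *; [ring| rewrite <- IHn; reflexivity]. Qed.

Lemma ex_series_le_R (u v : nat -> R) : (forall n, Rabs (u n) <= v n) -> ex_series v -> ex_series u.
Proof. intros H Hv. apply (@ex_series_le R_AbsRing R_CompleteNormedModule u v); auto. Qed.

Lemma tail_bound (b : nat -> R) r N : (forall n, Rabs (b n) <= 1) -> 0 <= r < 1 ->
  Rabs (PSeries b r - psum (fun n => b n * r ^ n) N) <= r ^ N / (1 - r).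
Proof.
  intros Hb Hr.
  assert (Hrr : Rabs r < 1) by (rewrite Rabs_right; lra).
  assert (Hg : forall M, ex_series (fun k => r ^ M * r ^ k)).
  { intros M. apply (ex_series_scal_l (r^M) (fun k => r^k)). apply ex_series_geom; auto. }
  assert (Hfb : forall n, Rabs (b n * r ^ n) <= r ^ n).
  { intros n. rewrite Rabs_mult, (Rabs_right (r^n)) by (apply Rle_ge, pow_le; lra).
    rewrite <- (Rmult_1_l (r^n)) at 2. apply Rmult_le_compat_r; auto. apply pow_le; lra. }
  assert (Htail : forall M, Rabs (Series (fun k => b (M + k)%nat * r ^ (M + k))) <= r ^ M / (1 - r)).
  { intros M. eapply Rle_trans. apply Series_Rabs.
    - apply ex_series_le_R with (v := fun k => r^M * r^k). 2: apply Hg.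
      intros n. rewrite Rabs_Rabsolu, <- pow_add. apply Hfb.
    - eapply Rle_trans. apply Series_le with (b := fun k => r^M * r^k).
      + intros n. split; [apply Rabs_pos|]. rewrite <- pow_add. apply Hfb.
      + apply Hg.
      + rewrite Series_scal_l, Series_geom by auto. unfold Rdiv. lra. }
  destruct N as [|N].
  - simpl. replace (PSeries b r - 0) with (Series (fun k => b (0 + k)%nat * r ^ (0 + k))).
    + apply Htail.
    + unfold PSeries. simpl. ring.
  - unfold PSeries. rewrite (Series_incr_n _ (S N)).
    2: lia.
    2:{ apply ex_series_Rabs.
      apply ex_series_le_R with (v := fun k => r^0 * r^k); [|apply Hg].
      intros n; rewrite Rabs_Rabsolu; simpl; rewrite Rmult_1_l; apply Hfb. }
    rewrite psum_S. simpl pred. replace (sum_f_R0 (fun k : nat => b k * r ^ k) N +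
      Series (fun k : nat => b (S N + k)%nat * r ^ (S N + k)) - sum_f_R0 (fun n : nat => b n * r ^ n) N)
      with (Series (fun k : nat => b (S N + k)%nat * r ^ (S N + k))) by ring.
    apply Htail.
Qed.

Lemma RI_plus (f g : R -> R) a b If Ig : is_RInt f a b If -> is_RInt g a b Ig ->
  is_RInt (fun x => f x + g x) a b (If + Ig).
Proof. intros H1 H2. exact (is_RInt_plus f g a b If Ig H1 H2). Qed.
Lemma RI_scal (f : R -> R) a b k If : is_RInt f a b If -> is_RInt (fun x => k * f x) a b (k * If).
Proof. intros H. exact (is_RInt_scal f a b k If H). Qed.
Lemma RI_const a b (v : R) : is_RInt (fun _ => v) a b ((b - a) * v).
Proof. exact (is_RInt_const a b v). Qed.
Lemma RI_ext (f g : R -> R) a b l : (forall x, f x = g x) -> is_RInt f a b l -> is_RInt g a b l.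
Proof. intros H. apply is_RInt_ext. intros; auto. Qed.
Lemma RI_eq (f : R -> R) a b l l' : is_RInt f a b l -> l = l' -> is_RInt f a b l'.
Proof. intros H ->; auto. Qed.

Lemma sin_mult2PI j : sin (INR j * (2 * PI)) = 0.
Proof.
  induction j. simpl. rewrite Rmult_0_l; apply sin_0.
  rewrite S_INR, Rmult_plus_distr_r, Rmult_1_l, sin_plus, IHj, sin_2PI. ring.
Qed.

Lemma int_cos j : (1 <= j)%nat -> is_RInt (fun t => cos (INR j * t)) 0 (2*PI) 0.
Proof.
  intros Hj. assert (HJ : 0 < INR j) by (apply lt_0_INR; lia).
  eapply RI_eq.
  - apply (is_RInt_derive (fun t => sin (INR j * t) / INR j)).
    + intros x _. auto_derive; auto. match goal with |- ?A = ?B => change (@eq R A B) end. field. lra.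
    + intros x _. apply (ex_derive_continuous (fun t => cos (INR j * t))). auto_derive; auto.
  - change (minus ?x ?y) with (x - y). match goal with |- ?A = ?B => change (@eq R A B) end. rewrite sin_mult2PI, Rmult_0_r, sin_0. unfold Rdiv. ring.
Qed.

Ltac rr := match goal with |- ?A = ?B => change (@eq R A B) end; ring.

Definition PU r t N := psum (fun n => Ua t n * r ^ n) N.
Definition PV r t N := psum (fun n => Va t n * r ^ n) N.

Lemma cross r N K : (N <= K)%nat ->
  is_RInt (fun t => PU r t N * cos (INR K * t) + PV r t N * sin (INR K * t)) 0 (2*PI) 0.
Proof.
  induction N as [|N IH]; intros HK.
  - eapply RI_eq. eapply RI_ext; [|apply (RI_const 0 (2*PI) 0)].
    + intros x. unfold PU, PV. simpl. ring.
    + rr.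
  - eapply RI_eq. eapply RI_ext.
    2: apply (RI_plus _ _ _ _ _ _ (IH ltac:(lia)) (RI_scal _ _ _ (a N * r ^ N) _ (int_cos (K - N) ltac:(lia)))).
    + intros x. unfold PU, PV. simpl. unfold Ua, Va. rewrite minus_INR by lia.
      replace ((INR K - INR N) * x) with (INR K * x - INR N * x) by ring.
      rewrite cos_minus. ring.
    + rr.
Qed.

Lemma parseval_partial r N :
  is_RInt (fun t => PU r t N ^ 2 + PV r t N ^ 2) 0 (2*PI) (2*PI * psum (fun n => (a n * r ^ n)^2) N).
Proof.
  induction N as [|N IH].
  - eapply RI_eq. eapply RI_ext; [|apply (RI_const 0 (2*PI) 0)].
    + intros x. unfold PU, PV. simpl. ring.
    + simpl. rr.
  - eapply RI_eq. eapply RI_ext.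
    2: apply (RI_plus _ _ _ _ _ _ (RI_plus _ _ _ _ _ _ IH (RI_scal _ _ _ (2 * (a N * r ^ N)) _ (cross r N N (le_n N))))
               (RI_const 0 (2*PI) ((a N * r ^ N)^2))).
    + intros x. unfold PU, PV. simpl. unfold Ua, Va.
      assert (Hs := sin2_cos2 (INR N * x)). unfold Rsqr in Hs.
      set (C := cos (INR N * x)) in *. set (S := sin (INR N * x)) in *.
      set (u := psum (fun n : nat => a n * cos (INR n * x) * r ^ n) N).
      set (v := psum (fun n : nat => a n * sin (INR n * x) * r ^ n) N).
      match goal with |- ?A = ?B => change (@eq R A B) end.
      transitivity (u^2 + v^2 + 2 * (a N * r^N) * (u * C + v * S) + (a N * r ^ N)^2 * (S*S + C*C)).
      * rewrite Hs. ring.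
      * ring.
    + simpl. rr.
Qed.

Definition gr r t := exp (atan (2 * r * cos t / (1 - r ^ 2))).

Lemma gr_ex r : 0 <= r < 1 -> forall a b, ex_RInt (gr r) a b.
Proof.
  intros Hr a0 b0. apply (@ex_RInt_continuous R_CompleteNormedModule). intros z _.
  apply (ex_derive_continuous (gr r)). unfold gr. auto_derive. nra.
Qed.

Lemma pw_bound r t N : 0 <= r < 1 ->
  Rabs (gr r t - (PU r t N ^ 2 + PV r t N ^ 2)) <= 6 * (r ^ N / (1 - r)) * / (1 - r).
Proof.
  intros Hr.
  assert (Hg : gr r t = Gf t r) by (rewrite Gclosed; auto).
  rewrite Hg. unfold Gf.
  assert (HU1 := tail_bound (Ua t) r N (Ua_b t) Hr).
  assert (HU0 := tail_bound (Ua t) r 0 (Ua_b t) Hr).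
  assert (HV1 := tail_bound (Va t) r N (Va_b t) Hr).
  assert (HV0 := tail_bound (Va t) r 0 (Va_b t) Hr).
  simpl psum in HU0, HV0. rewrite Rminus_0_r in HU0, HV0. simpl pow in HU0, HV0.
  fold (Uf t r) (Vf t r) in *. fold (PU r t N) (PV r t N) in *.
  unfold PU, PV in *. fold (Uf t r) in HU1. fold (Vf t r) in HV1.
  set (U := Uf t r) in *. set (V := Vf t r) in *.
  set (P := psum (fun n : nat => Ua t n * r ^ n) N) in *.
  set (Q := psum (fun n : nat => Va t n * r ^ n) N) in *.
  set (e := r ^ N / (1 - r)) in *.
  assert (He : 0 <= e) by (unfold e; apply Rmult_le_pos; [apply pow_le; lra | apply Rlt_le, Rinv_0_lt_compat; lra]).
  assert (Hi : 0 < / (1 - r)) by (apply Rinv_0_lt_compat; lra).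
  assert (He1 : e <= / (1 - r)).
  { unfold e, Rdiv. rewrite <- (Rmult_1_l (/ (1 - r))) at 2. apply Rmult_le_compat_r; [lra|].
    rewrite <- (pow1 N); apply pow_incr; lra. }
  replace (U ^ 2 + V ^ 2 - (P ^ 2 + Q ^ 2)) with ((U - P) * (U + P) + (V - Q) * (V + Q)) by ring.
  eapply Rle_trans. apply Rabs_triang. rewrite !Rabs_mult.
  assert (A1 : Rabs (U + P) <= 3 * / (1 - r)).
  { replace (U + P) with (2 * U - (U - P)) by ring. eapply Rle_trans. apply Rabs_triang.
    rewrite Rabs_Ropp, Rabs_mult, (Rabs_right 2) by lra. unfold Rdiv in HU0. lra. }
  assert (A2 : Rabs (V + Q) <= 3 * / (1 - r)).
  { replace (V + Q) with (2 * V - (V - Q)) by ring. eapply Rle_trans. apply Rabs_triang.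
    rewrite Rabs_Ropp, Rabs_mult, (Rabs_right 2) by lra. unfold Rdiv in HV0. lra. }
  assert (Rabs (U - P) * Rabs (U + P) <= e * (3 * / (1 - r))) by (apply Rmult_le_compat; auto; apply Rabs_pos).
  assert (Rabs (V - Q) * Rabs (V + Q) <= e * (3 * / (1 - r))) by (apply Rmult_le_compat; auto; apply Rabs_pos).
  lra.
Qed.

Definition J r := RInt (gr r) 0 (2 * PI).

Lemma Jbound r N : 0 <= r < 1 ->
  Rabs (J r - 2 * PI * psum (fun n => (a n * r ^ n) ^ 2) N) <= 2 * PI * (6 * (r ^ N / (1 - r)) * / (1 - r)).
Proof.
  intros Hr.
  assert (H1 := RInt_correct (gr r) 0 (2*PI) (gr_ex r Hr 0 (2*PI))).
  assert (H2 := parseval_partial r N).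
  assert (H3 := is_RInt_minus _ _ _ _ _ _ H1 H2).
  assert (HP := PI_RGT_0).
  generalize (norm_RInt_le_const (fun y => minus (gr r y) (PU r y N ^ 2 + PV r y N ^ 2)) 0 (2*PI) _ (6 * (r ^ N / (1 - r)) * / (1 - r)) ltac:(lra)
    (fun x _ => pw_bound r x N Hr) H3).
  intros H. replace (2 * PI - 0) with (2 * PI) in H by ring. exact H.
Qed.

Lemma exp_le x y : x <= y -> exp x <= exp y.
Proof. intros [H|H]; [apply Rlt_le, exp_increasing; auto | subst; lra]. Qed.
Lemma atan_le x y : x <= y -> atan x <= atan y.
Proof. intros [H|H]; [apply Rlt_le, atan_increasing; auto | subst; lra]. Qed.
Lemma cos_dec x y : 0 <= x -> x <= y -> y <= PI -> cos y <= cos x.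
Proof. intros H1 H2 H3. destruct H2 as [H2|H2]; [apply Rlt_le, cos_decreasing_1; lra | subst; lra]. Qed.

Lemma RInt_lower (f : R -> R) a b m : a <= b -> ex_RInt f a b -> (forall x, a < x < b -> m <= f x) ->
  (b - a) * m <= RInt f a b.
Proof.
  intros Hab Hf Hm. assert (H := RInt_le (fun _ => m) f a b Hab (ex_RInt_const _ _ _) Hf Hm).
  rewrite RInt_const in H. exact H.
Qed.
Lemma RInt_upper (f : R -> R) a b m : a <= b -> ex_RInt f a b -> (forall x, a < x < b -> f x <= m) ->
  RInt f a b <= (b - a) * m.
Proof.
  intros Hab Hf Hm. assert (H := RInt_le f (fun _ => m) a b Hab Hf (ex_RInt_const _ _ _) Hm).
  rewrite RInt_const in H. exact H.
Qed.

Lemma RInt_split3 (f : R -> R) a b c d : (forall u v, ex_RInt f u v) ->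
  RInt f a d = RInt f a b + RInt f b c + RInt f c d.
Proof.
  intros Hf. rewrite <- (RInt_Chasles f a c d), <- (RInt_Chasles f a b c); auto.
Qed.

Definition wr r := 2 * r / (1 - r ^ 2).

Lemma gr_w r t : 0 <= r < 1 -> gr r t = exp (atan (wr r * cos t)).
Proof. intros Hr. unfold gr, wr. f_equal. f_equal. field. nra. Qed.

Lemma gr_bounds r t : 0 <= r < 1 -> exp (- (PI/2)) <= gr r t <= exp (PI / 2).
Proof.
  intros Hr. unfold gr. destruct (atan_bound (2 * r * cos t / (1 - r ^ 2))).
  split; apply exp_le; lra.
Qed.

Lemma wr_pos r : 0 <= r < 1 -> 0 <= wr r.
Proof. intros Hr. unfold wr. apply Rmult_le_pos; [lra|]. apply Rlt_le, Rinv_0_lt_compat. nra. Qed.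

Lemma J_lower r th : 0 <= r < 1 -> 0 < th < PI / 2 ->
  2 * th * exp (atan (wr r * cos th)) + (2 * PI - 2 * th) * exp (- (PI / 2)) <= J r.
Proof.
  intros Hr Hth. assert (HP := PI_RGT_0). assert (Hw := wr_pos r Hr).
  unfold J. rewrite (RInt_split3 _ 0 th (2*PI - th) (2*PI)) by (apply gr_ex; auto).
  assert (A : (th - 0) * exp (atan (wr r * cos th)) <= RInt (gr r) 0 th).
  { apply RInt_lower; [lra | apply gr_ex; auto |]. intros x Hx. rewrite gr_w by auto.
    apply exp_le, atan_le, Rmult_le_compat_l; auto. apply cos_dec; lra. }
  assert (B : (2*PI - th - th) * exp (- (PI/2)) <= RInt (gr r) th (2*PI - th)).
  { apply RInt_lower; [lra | apply gr_ex; auto |]. intros x Hx. apply gr_bounds; auto. }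
  assert (C : (2*PI - (2*PI - th)) * exp (atan (wr r * cos th)) <= RInt (gr r) (2*PI - th) (2*PI)).
  { apply RInt_lower; [lra | apply gr_ex; auto |]. intros x Hx. rewrite gr_w by auto.
    apply exp_le, atan_le, Rmult_le_compat_l; auto.
    replace (cos x) with (cos (2 * PI - x)) by (rewrite cos_minus, cos_2PI, sin_2PI; ring).
    apply cos_dec; lra. }
  change (plus ?x ?y) with (x + y) in *. lra.
Qed.

Lemma J_upper r th : 0 <= r < 1 -> 0 < th < PI / 2 ->
  J r <= 2 * th * exp (- atan (wr r * cos th)) + (2 * PI - 2 * th) * exp (PI / 2).
Proof.
  intros Hr Hth. assert (HP := PI_RGT_0). assert (Hw := wr_pos r Hr).
  unfold J. rewrite (RInt_split3 _ 0 (PI - th) (PI + th) (2*PI)) by (apply gr_ex; auto).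
  assert (A : RInt (gr r) 0 (PI - th) <= (PI - th - 0) * exp (PI/2)).
  { apply RInt_upper; [lra | apply gr_ex; auto |]. intros x Hx. apply gr_bounds; auto. }
  assert (C : RInt (gr r) (PI + th) (2*PI) <= (2*PI - (PI + th)) * exp (PI/2)).
  { apply RInt_upper; [lra | apply gr_ex; auto |]. intros x Hx. apply gr_bounds; auto. }
  assert (B : RInt (gr r) (PI - th) (PI + th) <= (PI + th - (PI - th)) * exp (- atan (wr r * cos th))).
  { apply RInt_upper; [lra | apply gr_ex; auto |]. intros x Hx. rewrite gr_w by auto.
    apply exp_le. rewrite <- atan_opp. apply atan_le.
    replace (cos x) with (- cos (x - PI)) by (rewrite cos_minus, cos_PI, sin_PI; ring).
    assert (cos th <= cos (x - PI)).
    { destruct (Rle_dec PI x).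
      - apply cos_dec; lra.
      - replace (x - PI) with (- (PI - x)) by ring. rewrite cos_neg. apply cos_dec; lra. }
    nra. }
  change (plus ?x ?y) with (x + y) in *. lra.
Qed.

Lemma atan_big eta : 0 < eta <= 1/2 -> exists rho, 1/2 <= rho < 1 /\
  forall r, rho <= r < 1 -> PI / 2 - eta <= atan (wr r * cos (PI / 2 - eta)).
Proof.
  intros He. assert (HP := PI2_3_2).
  rewrite cos_shift.
  assert (Hs : 0 < sin eta) by (apply sin_gt_0; lra).
  assert (Ht : 0 < tan eta) by (apply tan_gt_0; lra).
  set (X := / (tan eta * sin eta)).
  assert (HX : 0 < X) by (apply Rinv_0_lt_compat; nra).
  exists (1 - / (2 * X + 2)).
  assert (H2 : 0 < / (2 * X + 2) <= 1/2).
  { split. apply Rinv_0_lt_compat; lra.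
    apply (Rmult_le_reg_l (2 * X + 2)). lra. rewrite Rinv_r by lra. lra. }
  split; [lra|].
  intros r Hr.
  assert (Hw : X <= wr r).
  { unfold wr.
    assert (H1r : 0 < 1 - r) by lra.
    assert (Hk : 1 - r <= / (2 * X + 2)) by lra.
    assert (Hk2 : (1 - r) * (2 * X + 2) <= 1).
    { apply (Rmult_le_compat_r (2*X+2)) in Hk; [|lra]. rewrite Rinv_l in Hk by lra. lra. }
    apply (Rmult_le_reg_r (1 - r ^ 2)). nra.
    unfold Rdiv. rewrite Rmult_assoc, Rinv_l by nra. nra. }
  set (x := wr r * sin eta).
  assert (Hx : / tan eta <= x).
  { unfold x. replace (/ tan eta) with (X * sin eta) by (unfold X; field; lra).
    apply Rmult_le_compat_r; lra. }
  assert (Hx0 : 0 < x) by (eapply Rlt_le_trans; [apply Rinv_0_lt_compat, Ht | exact Hx]).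
  assert (Hix : / x <= tan eta).
  { rewrite <- (Rinv_inv (tan eta)). apply Rinv_le_contravar; auto. apply Rinv_0_lt_compat; auto. }
  assert (Ha : atan (/ x) <= eta).
  { rewrite <- (atan_tan eta) by lra. apply atan_le; auto. }
  rewrite atan_inv in Ha by auto. lra.
Qed.

Definition E := exp (PI / 2).
Definition E' := exp (- (PI / 2)).
Definition L := (E + E') / 2.

Lemma EE' : E * E' = 1.
Proof. unfold E, E'. rewrite <- exp_plus. replace (PI / 2 + - (PI / 2)) with 0 by ring. apply exp_0. Qed.
Lemma E_ge1 : 1 <= E.
Proof. unfold E. rewrite <- exp_0. apply exp_le. assert (H := PI2_RGT_0). lra. Qed.
Lemma E'_le1 : 0 < E' <= 1.
Proof. unfold E'. split. apply exp_pos. rewrite <- exp_0. apply exp_le. assert (H := PI2_RGT_0). lra. Qed.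

Lemma exp_small eta : 0 <= eta <= 1/2 -> exp eta <= 1 + 2 * eta.
Proof.
  intros He. assert (H1 := exp_ineq1_le (- eta)).
  assert (H2 : exp eta * exp (- eta) = 1) by (rewrite <- exp_plus; replace (eta + - eta) with 0 by ring; apply exp_0).
  assert (H3 := exp_pos eta).
  assert (exp eta * (1 - eta) <= 1) by nra.
  nra.
Qed.

Lemma UB eps : 0 < eps -> exists rho, 1/2 <= rho < 1 /\ forall r, rho <= r < 1 -> J r <= 2 * PI * (L + eps).
Proof.
  intros Heps. assert (HP := PI2_3_2). assert (HE := E_ge1). assert (HE' := E'_le1).
  set (eta := Rmin (1/2) (eps / (2 * (1 + E)))).
  assert (Heta : 0 < eta <= 1/2).
  { unfold eta. split; [apply Rmin_pos; [lra| apply Rdiv_lt_0_compat; lra] | apply Rmin_l]. }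
  assert (Heta2 : eta <= eps / (2 * (1 + E))) by apply Rmin_r.
  assert (Heta3 : eta * (2 * (1 + E)) <= eps).
  { apply (Rmult_le_compat_r (2 * (1 + E))) in Heta2; [|lra]. unfold Rdiv in Heta2.
    rewrite Rmult_assoc, Rinv_l in Heta2 by lra. lra. }
  destruct (atan_big eta Heta) as [rho [Hrho Hat]].
  exists rho. split; auto. intros r Hr.
  assert (Hr0 : 0 <= r < 1) by lra.
  eapply Rle_trans. apply (J_upper r (PI / 2 - eta) Hr0). lra.
  assert (He1 : exp (- atan (wr r * cos (PI / 2 - eta))) <= E' * (1 + 2 * eta)).
  { eapply Rle_trans. apply exp_le. apply Ropp_le_contravar. apply (Hat r Hr).
    replace (- (PI / 2 - eta)) with (- (PI / 2) + eta) by ring. rewrite exp_plus. fold E'.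
    apply Rmult_le_compat_l; [lra|]. apply exp_small; lra. }
  fold E.
  assert (Hx : 0 <= exp (- atan (wr r * cos (PI / 2 - eta)))) by (apply Rlt_le, exp_pos).
  assert (A1 : 2 * (PI / 2 - eta) * exp (- atan (wr r * cos (PI / 2 - eta))) <= 2 * (PI / 2 - eta) * (E' * (1 + 2 * eta))).
  { apply Rmult_le_compat_l; lra. }
  unfold L.
  assert (A2 : 2 * (PI/2 - eta) * (E' * (1 + 2 * eta)) <= PI * E' + 2 * PI * eta * E') by nra.
  assert (A3 : PI * eta * E' <= PI * eta).
  { rewrite <- (Rmult_1_r (PI * eta)) at 2. apply Rmult_le_compat_l; [apply Rmult_le_pos|]; lra. }
  assert (A4 : eta * E <= PI * eta * E).
  { assert (0 <= (PI - 1) * (eta * E)) by (apply Rmult_le_pos; [lra| apply Rmult_le_pos; lra]). nra. }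
  assert (A5 : PI * (eta * (2 * (1 + E))) <= PI * eps) by nra.
  nra.
Qed.

Lemma LB eps : 0 < eps -> exists r, 0 <= r < 1 /\ 2 * PI * (L - eps) <= J r.
Proof.
  intros Heps. assert (HP := PI2_3_2). assert (HE := E_ge1). assert (HE' := E'_le1).
  set (eta := Rmin (1/2) (eps / (2 * (1 + E)))).
  assert (Heta : 0 < eta <= 1/2).
  { unfold eta. split; [apply Rmin_pos; [lra| apply Rdiv_lt_0_compat; lra] | apply Rmin_l]. }
  assert (Heta2 : eta <= eps / (2 * (1 + E))) by apply Rmin_r.
  assert (Heta3 : eta * (2 * (1 + E)) <= eps).
  { apply (Rmult_le_compat_r (2 * (1 + E))) in Heta2; [|lra]. unfold Rdiv in Heta2.
    rewrite Rmult_assoc, Rinv_l in Heta2 by lra. lra. }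
  destruct (atan_big eta Heta) as [rho [Hrho Hat]].
  exists rho. split; [lra|].
  assert (Hr0 : 0 <= rho < 1) by lra.
  eapply Rle_trans. 2: apply (J_lower rho (PI / 2 - eta) Hr0); lra.
  assert (He1 : E * (1 - eta) <= exp (atan (wr rho * cos (PI / 2 - eta)))).
  { eapply Rle_trans. 2: apply exp_le, (Hat rho); lra.
    replace (PI / 2 - eta) with (PI / 2 + - eta) by ring. rewrite exp_plus. fold E.
    apply Rmult_le_compat_l; [lra|]. generalize (exp_ineq1_le (- eta)); lra. }
  assert (A1 : 2 * (PI / 2 - eta) * (E * (1 - eta)) <= 2 * (PI / 2 - eta) * exp (atan (wr rho * cos (PI / 2 - eta)))).
  { apply Rmult_le_compat_l; lra. }
  fold E'. unfold L.
  assert (A2 : PI * E' <= (2 * PI - 2 * (PI / 2 - eta)) * E') by nra.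
  assert (A3 : PI * E - eta * E * (PI + 2) <= 2 * (PI / 2 - eta) * (E * (1 - eta))) by nra.
  assert (A4 : eta * E * (PI + 2) <= eps * (PI + 2) / 2).
  { assert (eta * E <= eps / 2) by nra. unfold Rdiv. nra. }
  nra.
Qed.

Lemma psum_mono f N M : (forall n, 0 <= f n) -> (N <= M)%nat -> psum f N <= psum f M.
Proof.
  intros Hf HNM. induction HNM; [lra|]. simpl. specialize (Hf m). lra.
Qed.

Lemma psum_le f g N : (forall n, f n <= g n) -> psum f N <= psum g N.
Proof. intros H. induction N; simpl; [lra|]. specialize (H N). lra. Qed.

Lemma abs_le x y : Rabs x <= y -> - y <= x <= y.
Proof. unfold Rabs. destruct (Rcase_abs x); lra. Qed.

Definition T r N := psum (fun n => (a n * r ^ n) ^ 2) N.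
Definition P N := psum (fun n => a n ^ 2) N.

Lemma T_le_J r N : 0 <= r < 1 -> 2 * PI * T r N <= J r.
Proof.
  intros Hr. assert (HP := PI_RGT_0).
  destruct (Rle_dec (2 * PI * T r N) (J r)) as [H|H]; auto. exfalso.
  set (d := 2 * PI * T r N - J r). assert (Hd : 0 < d) by (unfold d; lra).
  assert (H1r : 0 < 1 - r) by lra.
  assert (Hy : 0 < d * (1 - r) ^ 2 / (24 * PI)).
  { apply Rdiv_lt_0_compat; [apply Rmult_lt_0_compat; [lra | apply pow_lt; lra] | lra]. }
  destruct (pow_lt_1_zero r ltac:(rewrite Rabs_right; lra) _ Hy) as [M0 HM0].
  set (M := (M0 + N)%nat).
  specialize (HM0 M ltac:(unfold M; lia)). rewrite Rabs_right in HM0 by (apply Rle_ge, pow_le; lra).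
  assert (HJ := Jbound r M Hr). fold (T r M) in HJ.
  assert (HTM : T r N <= T r M) by (apply psum_mono; [intros; apply pow2_ge_0 | unfold M; lia]).
  assert (Hq : 2 * PI * (6 * (r ^ M / (1 - r)) * / (1 - r)) < d / 2).
  { replace (2 * PI * (6 * (r ^ M / (1 - r)) * / (1 - r))) with (12 * PI * r ^ M / (1 - r) ^ 2) by (field; lra).
    apply (Rmult_lt_reg_r ((1 - r) ^ 2)). apply pow_lt; lra.
    unfold Rdiv. rewrite Rmult_assoc, Rinv_l by (apply pow_nonzero; lra).
    apply (Rmult_lt_compat_l (12 * PI)) in HM0; [|lra].
    replace (12 * PI * (d * (1 - r) ^ 2 / (24 * PI))) with (d * / 2 * (1 - r) ^ 2) in HM0 by (field; lra).
    lra. }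
  apply abs_le in HJ. destruct HJ.
  assert (2*PI*T r N <= 2*PI*T r M) by (apply Rmult_le_compat_l; lra). unfold d in *. lra.
Qed.

Lemma J_le_P r N : 0 <= r < 1 -> J r <= 2 * PI * P N + 2 * PI * (6 * (r ^ N / (1 - r)) * / (1 - r)).
Proof.
  intros Hr. assert (HJ := Jbound r N Hr). fold (T r N) in HJ.
  assert (HTP : T r N <= P N).
  { apply psum_le. intros n. rewrite Rpow_mult_distr.
    assert (0 <= (r ^ n) ^ 2 <= 1).
    { split. apply pow2_ge_0. rewrite <- (pow1 2). apply pow_incr. split; [apply pow_le; lra|].
      rewrite <- (pow1 n). apply pow_incr. lra. }
    assert (0 <= a n ^ 2) by apply pow2_ge_0. nra. }
  assert (HP := PI_RGT_0).
  apply abs_le in HJ. destruct HJ. nra.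
Qed.

Lemma Bernoulli r N : 0 <= r <= 1 -> 1 - INR N * (1 - r) <= r ^ N.
Proof.
  intros Hr. induction N.
  - simpl. lra.
  - rewrite S_INR. simpl.
    assert (0 <= r * (r ^ N - (1 - INR N * (1 - r)))) by (apply Rmult_le_pos; lra).
    assert (0 <= INR N * ((1 - r) * (1 - r))) by (apply Rmult_le_pos; [apply pos_INR | nra]).
    nra.
Qed.

Lemma T_ge_P r N : 0 <= r <= 1 -> (r ^ N) ^ 2 * P N <= T r N.
Proof.
  intros Hr. unfold T, P. induction N.
  - simpl. lra.
  - cbn [psum]. rewrite Rmult_plus_distr_l.
    assert (Hm : (r ^ S N) ^ 2 * psum (fun n : nat => a n ^ 2) N <= (r ^ N) ^ 2 * psum (fun n : nat => a n ^ 2) N).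
    { apply Rmult_le_compat_r. apply (psum_mono (fun n => a n ^ 2) 0 N); [intros; apply pow2_ge_0 | lia].
      apply pow_incr. split. apply pow_le; lra. simpl. assert (0 <= r ^ N) by (apply pow_le; lra). nra. }
    assert ((r ^ S N) ^ 2 * a N ^ 2 <= (a N * r ^ N) ^ 2).
    { rewrite Rpow_mult_distr. rewrite Rmult_comm. apply Rmult_le_compat_l. apply pow2_ge_0.
      apply pow_incr. split. apply pow_le; lra. simpl. assert (0 <= r ^ N) by (apply pow_le; lra). nra. }
    lra.
Qed.

Lemma P_le_L N : P N <= L.
Proof.
  destruct (Rle_dec (P N) L) as [H|H]; auto. exfalso.
  assert (HP := PI_RGT_0).
  set (d := P N - L). assert (Hd : 0 < d) by (unfold d; lra).
  destruct (UB (d / 4)) as [rho [Hrho HU]]. lra.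
  set (r := Rmax rho (1 - d / (8 * (INR N + 1) * (L + d)))).
  assert (HL : 0 < L).
  { unfold L. generalize E_ge1 E'_le1. lra. }
  assert (Hk : 0 < d / (8 * (INR N + 1) * (L + d))).
  { apply Rdiv_lt_0_compat; auto. assert (0 <= INR N) by apply pos_INR. nra. }
  assert (Hr : rho <= r < 1).
  { unfold r. split. apply Rmax_l. apply Rmax_lub_lt; lra. }
  assert (H1 := T_le_J r N ltac:(lra)).
  assert (H2 := HU r Hr).
  assert (H3 := T_ge_P r N ltac:(lra)).
  assert (H4 := Bernoulli r N ltac:(lra)).
  assert (Hr2 : 1 - r <= d / (8 * (INR N + 1) * (L + d))).
  { assert (1 - d / (8 * (INR N + 1) * (L + d)) <= r) by apply Rmax_r. lra. }
  assert (HN : 0 <= INR N) by apply pos_INR.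
  assert (Hq : INR N * (1 - r) * (L + d) <= d / 8).
  { apply (Rmult_le_compat_r (INR N * (L + d))) in Hr2; [|nra].
    replace (d / (8 * (INR N + 1) * (L + d)) * (INR N * (L + d))) with (d / 8 * (INR N / (INR N + 1))) in Hr2
      by (field; split; lra).
    assert (INR N / (INR N + 1) <= 1).
    { apply (Rmult_le_reg_r (INR N + 1)). lra. unfold Rdiv. rewrite Rmult_assoc, Rinv_l by lra. lra. }
    nra. }
  assert (Hpow : 1 - 2 * INR N * (1 - r) <= (r ^ N) ^ 2).
  { assert (0 <= r ^ N) by (apply pow_le; lra). destruct (Rle_dec 0 (1 - INR N * (1 - r))).
    - assert ((1 - INR N * (1 - r)) ^ 2 <= (r ^ N) ^ 2) by (apply pow_incr; lra).
      assert (0 <= (INR N * (1 - r)) ^ 2) by apply pow2_ge_0. nra.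
    - assert (0 <= (r ^ N) ^ 2) by apply pow2_ge_0. lra. }
  assert (HPN : P N = L + d) by (unfold d; ring).
  assert (HPpos : 0 <= P N) by lra.
  assert ((1 - 2 * INR N * (1 - r)) * P N <= (r ^ N) ^ 2 * P N) by (apply Rmult_le_compat_r; auto).
  assert (T r N <= L + d / 4) by nra.
  nra.
Qed.

Lemma P_near_L eps : 0 < eps -> exists N, L - eps <= P N.
Proof.
  intros He. assert (HP := PI_RGT_0).
  destruct (LB (eps / 2)) as [r [Hr HJ]]. lra.
  assert (H1r : 0 < 1 - r) by lra.
  assert (Hy : 0 < eps * (1 - r) ^ 2 / 24).
  { apply Rdiv_lt_0_compat; [apply Rmult_lt_0_compat; [lra | apply pow_lt; lra] | lra]. }
  destruct (pow_lt_1_zero r ltac:(rewrite Rabs_right; lra) _ Hy) as [N HN].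
  exists N. specialize (HN N (le_n N)). rewrite Rabs_right in HN by (apply Rle_ge, pow_le; lra).
  assert (H := J_le_P r N Hr).
  assert (Hq : 6 * (r ^ N / (1 - r)) * / (1 - r) < eps / 4).
  { replace (6 * (r ^ N / (1 - r)) * / (1 - r)) with (6 * r ^ N / (1 - r) ^ 2) by (field; lra).
    apply (Rmult_lt_reg_r ((1 - r) ^ 2)). apply pow_lt; lra.
    unfold Rdiv. rewrite Rmult_assoc, Rinv_l by (apply pow_nonzero; lra).
    replace (eps * (1 - r) ^ 2 / 24) with (eps * / 4 * (1 - r) ^ 2 / 6) in HN by field.
    lra. }
  nra.
Qed.

Lemma P_sum n : P (S (S n)) = 1 + sum_f_R0 (fun k => a (S k) ^ 2) n.
Proof.
  unfold P. induction n.
  - simpl. rewrite a0. ring.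
  - change (psum (fun n0 : nat => a n0 ^ 2) (S (S (S n)))) with
      (psum (fun n0 : nat => a n0 ^ 2) (S (S n)) + a (S (S n)) ^ 2).
    rewrite IHn. simpl. ring.
Qed.

Theorem mainTheorem6 :
  is_series (fun n : nat => (a (S n)) ^ 2)
            ((exp (PI / 2) + exp (- (PI / 2))) / 2 - 1).
Proof.
  apply is_series_Reals. intros eps He.
  destruct (P_near_L (eps/2) ltac:(lra)) as [N HN].
  exists N. intros n Hn. unfold R_dist.
  assert (H1 : P N <= P (S (S n))) by (apply psum_mono; [intros; apply pow2_ge_0 | lia]).
  assert (H2 := P_le_L (S (S n))).
  rewrite P_sum in H1, H2. fold E E'. fold L.
  apply Rabs_def1; lra.
Qed.
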